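(* Let $n\in\mathbb{N}$ and let $A$ be an $n\times n$ acyclic real symmetric matrix. Suppose $\lambda$ is an eigenvalue of $A$ of multiplicity $k$ and $U=\{u_1,\ldots,u_k\}$ is a $\lambda$-star set of $A$. For $i\in[k]$ let $U_i=U\setminus\{u_i\}$ and let $A_i$ be the principal submatrix of $A-U_i$ corresponding to the connected component of $G(A-U_i)$ containing $u_i$. Define $\boldsymbol{\alpha}_i\in\mathbb{R}^n$ by \[ \boldsymbol{\alpha}_i(v)=\begin{cases} W(P_{u_i,v})\,\phi(A_i-P_{u_i,v},\lambda) & \text{if } v \text{ is an index of } A_i,\\ 0 & \text{otherwise}.\end{cases} \] Then $\boldsymbol{\alpha}_1,\ldots,\boldsymbol{\alpha}_k$ are $k$ linearly independent $\lambda$-eigenvectors of $A$.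
   Context: $[n]=\{1,\ldots,n\}$. For a real symmetric matrix $A$ with rows/columns indexed by a set $I$, its graph $G(A)$ has vertex set $I$, with $u\neq v$ adjacent iff $A_{uv}\neq 0$; edge $uv$ has weight $w(uv)=A_{uv}$. $A$ is called acyclic if $G(A)$ is a forest. For $u,v$ in the same component, $P_{u,v}$ is the unique path between them (a single vertex if $u=v$), and $W(P_{u,v})$ is the product of the weights of its edges ($1$ if $u=v$). For an index set $U$, $A-U$ is the matrix obtained by deleting the rows and columns indexed by $U$. $\phi(B,\lambda)=\det(\lambda\mathbb{I}-B)$, with $\phi$ of the empty matrix equal to $1$. If $\lambda$ is an eigenvalue of $A$ of multiplicity $k$, a set $U$ of indices is a $\lambda$-star set if $|U|=k$ and $\lambda$ is not an eigenvalue of $A-U$. *)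

(* Defs.v *)
From HB Require Import structures.
From Stdlib Require Import ClassicalEpsilon.
From mathcomp Require Import all_boot all_order all_algebra.
From mathcomp Require Import reals.
Set Implicit Arguments. Unset Strict Implicit. Unset Printing Implicit Defensive.
Import Order.TTheory GRing.Theory Num.Theory.
Local Open Scope ring_scope.

Section Defs.
Variables (R : realType) (n : nat).
Implicit Types (A : 'M[R]_n) (S : {set 'I_n}).

Definition adjA A : rel 'I_n := fun u v => (u != v) && (A u v != 0).

(* G(A) restricted to the vertex set S (i.e. the graph of the principal
   submatrix indexed by S, with indices kept as in A) *)
Definition adjS A S : rel 'I_n := fun u v => [&& u \in S, v \in S & adjA A u v].

(* A is acyclic: G(A) has no cycle (a cycle = a closed walk through at
   least 3 pairwise distinct vertices) *)
Definition acyclic A : Prop :=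
  forall c : seq 'I_n, ucycle (adjA A) c -> (size c <= 2)%N.

(* principal submatrix of A indexed by S; A - U is psub A (~: U) *)
Definition psub A S : 'M[R]_#|S| :=
  \matrix_(i, j) A (enum_val i) (enum_val j).

(* phi(B, lambda) = det(lambda I - B) for the principal submatrix on S;
   the empty matrix gives 1 *)
Definition phi A S (l : R) : R := (char_poly (psub A S)).[l].

Definition eig_mult A (l : R) : nat := mup l (char_poly A).

Definition star_set A (l : R) S : Prop :=
  #|S| = eig_mult A l /\ ~~ eigenvalue (psub A (~: S)) l.

Definition component A S x : {set 'I_n} := [set y | connect (adjS A S) x y].

(* the path P_{u,v} of G(A) from u to v, as the list of vertices after u
   (the one chosen when unique; [::] if u = v) *)
Definition is_upath A u v (p : seq 'I_n) : Prop :=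
  [&& path (adjA A) u p, last u p == v & uniq (u :: p)].

Definition upath A u v : seq 'I_n :=
  epsilon (inhabits [::]) (fun p => is_upath A u v p).

Definition pathset A u v : {set 'I_n} := [set x in u :: upath A u v].

Definition pathweight A u v : R :=
  \prod_(e <- zip (u :: upath A u v) (upath A u v)) A e.1 e.2.

End Defs.

(* Main.v *)
Require Import Defs.
From HB Require Import structures.
From Stdlib Require Import ClassicalEpsilon.
From mathcomp Require Import all_boot all_order all_algebra.
From mathcomp Require Import reals.
From mathcomp Require Import perm.
From mathcomp Require Import ring.
From mathcomp Require Import zify.
Set Implicit Arguments. Unset Strict Implicit. Unset Printing Implicit Defensive.
Import Order.TTheory GRing.Theory Num.Theory.
Local Open Scope ring_scope.
Section Gen.
Variable R : comUnitRingType.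

Lemma det_cast m n (e : m = n) (B : 'M[R]_m) : \det (castmx (e, e) B) = \det B.
Proof. by case: n / e; rewrite castmx_id. Qed.

Lemma det_perm_conj n (s : 'S_n) (M : 'M[R]_n) :
  \det (\matrix_(i, j) M (s i) (s j)) = \det M.
Proof.
have -> : \matrix_(i, j) M (s i) (s j) = row_perm s (col_perm s M).
  by apply/matrixP => i j; rewrite !mxE.
rewrite row_permE col_permE !det_mulmx !det_perm odd_permV.
by rewrite mulrCA -expr2 sqrr_sign mulr1.
Qed.

Lemma det_sub_id n (S : {set 'I_n}) (M : 'M[R]_n) :
  (forall i j, (i \notin S) || (j \notin S) -> M i j = (i == j)%:R) ->
  \det M = \det (\matrix_(i, j) M (enum_val i) (enum_val j) : 'M_#|S|).
Proof.
move=> HM.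
have e : (#|S| + #|~: S| = n)%N by rewrite cardsC card_ord.
pose f (i : 'I_(#|S| + #|~: S|)) : 'I_n :=
  match split i with inl a => enum_val a | inr b => enum_val b end.
have finj : injective f.
  move=> i j; rewrite /f -{2}(splitK i) -{2}(splitK j).
  case: (split i) => a; case: (split j) => b /= h.
  - by rewrite (enum_val_inj h).
  - by move: (enum_valP a) (enum_valP b); rewrite h inE; case: (_ \in S).
  - by move: (enum_valP a) (enum_valP b); rewrite h inE; case: (_ \in S).
  - by rewrite (enum_val_inj h).
pose g := f \o cast_ord (esym e).
have ginj : injective g by apply: inj_comp => //; apply: cast_ord_inj.
pose s := perm ginj.
pose Mf := \matrix_(i, j) M (f i) (f j).
have -> : \det M = \det Mf.
  rewrite -(det_perm_conj s) -(det_cast e Mf); congr (\det _).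
  by apply/matrixP => i j; rewrite castmxE !mxE !permE.
have -> : Mf = block_mx (\matrix_(i, j) M (enum_val i) (enum_val j) : 'M_#|S|) 0 0 1%:M.
  have hl (x : 'I_#|S|) : split (lshift #|~: S| x) = inl x := unsplitK (inl _ x).
  have hr (x : 'I_#|~: S|) : split (rshift #|S| x) = inr x := unsplitK (inr _ x).
  apply/matrixP => i j; rewrite -(splitK i) -(splitK j).
  case: (split i) => a; case: (split j) => b /=.
  - by rewrite block_mxEul !mxE /f !hl.
  - rewrite block_mxEur !mxE /f ?hl ?hr HM; last by have := enum_valP b; rewrite inE => ->; rewrite orbT.
    by case: eqP => // h; move: (enum_valP a) (enum_valP b); rewrite h inE; case: (_ \in S).
  - rewrite block_mxEdl !mxE /f ?hl ?hr HM; last by have := enum_valP a; rewrite inE => ->.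
    by case: eqP => // h; move: (enum_valP a) (enum_valP b); rewrite h inE; case: (_ \in S).
  - rewrite block_mxEdr !mxE /f ?hl ?hr HM; last by have := enum_valP a; rewrite inE => ->.
    by rewrite (inj_eq enum_val_inj).
by rewrite det_ublock det1 mulr1.
Qed.

End Gen.
Section Alg.
Variable R : realFieldType.

Lemma horner_char (m : nat) (M : 'M[R]_m) (a : R) :
  (char_poly M).[a] = \det (a%:M - M).
Proof.
rewrite /char_poly -[_.[a]]/(horner_eval a _) -det_map_mx; congr (\det _).
apply/matrixP => i j; rewrite !mxE; rewrite [LHS]horner_evalE.
by rewrite hornerD hornerN hornerMn hornerX hornerC.
Qed.

Lemma self_dot0 N (w : 'rV[R]_N) : w *m w^T = 0 -> w = 0.
Proof.
move/matrixP/(_ 0 0); rewrite !mxE => h.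
have : \sum_j w 0 j ^+ 2 == 0.
  by apply/eqP; rewrite -[RHS]h; apply: eq_bigr => j _; rewrite !mxE expr2.
rewrite psumr_eq0; last by move=> j _; exact: sqr_ge0.
move/allP => H; apply/rowP => j; rewrite !mxE.
by have := H j (mem_index_enum j); rewrite sqrf_eq0 => /eqP.
Qed.

Lemma det_cancel m p (M : 'M[R]_m) (t : 'M[R]_(p, m)) :
  \det M != 0 -> t *m M = 0 -> t = 0.
Proof.
move=> hM ht; have uM : M \in unitmx by rewrite unitmxE unitfE.
by rewrite -(mulmxK uM t) ht mul0mx.
Qed.

Lemma gram_det p N (B : 'M[R]_(p, N)) : row_free B -> \det (B *m B^T) != 0.
Proof.
move=> fB; apply/negP => /det0P [v vn0 vBB].
have h : (v *m B) *m (v *m B)^T = 0.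
  by rewrite trmx_mul mulmxA -(mulmxA v) vBB mul0mx.
move/self_dot0: h => /eqP; rewrite mulmx_free_eq0 //.
by move/eqP => v0; move: vn0; rewrite v0 eqxx.
Qed.

Lemma alg_core p q N (e : (p + q)%N = N) (A : 'M[R]_N) (B : 'M_(p, N))
    (C : 'M_(q, N)) l :
  A^T = A -> B *m A = l *: B -> B *m C^T = 0 -> \det (B *m B^T) != 0 ->
  \det (C *m C^T) != 0 -> \det (C *m (A - l%:M) *m C^T) != 0 ->
  mup l (char_poly A) = p.
Proof.
case: N / e in A B C *.
move=> sA BA BC dB dC dCA.
have CB : C *m B^T = 0 by rewrite -[C]trmxK -trmx_mul BC trmx0.
have CAB : C *m A *m B^T = 0.
  by rewrite -mulmxA -{1}sA -trmx_mul BA linearZ /= -scalemxAr CB scaler0.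
pose P := col_mx B C.
have PP : P *m P^T = block_mx (B *m B^T) 0 0 (C *m C^T).
  by rewrite tr_col_mx mul_col_row BC CB.
have PAP : P *m A *m P^T = block_mx (l *: (B *m B^T)) 0 0 (C *m A *m C^T).
  by rewrite mul_col_mx tr_col_mx mul_col_row BA -!scalemxAl BC CAB scaler0.
have dP : \det P != 0.
  have := PP; move/(congr1 determinant); rewrite det_mulmx det_tr det_ublock.
  by move=> h; apply/eqP => h0; move: h; rewrite h0 mul0r => /esym/eqP; rewrite mulf_eq0 (negbTE dB) (negbTE dC).
pose D := 'X *: map_mx polyC (C *m C^T) - map_mx polyC (C *m A *m C^T).
have key : map_mx polyC P *m char_poly_mx A *m (map_mx polyC P)^T =
   block_mx (('X - l%:P) *: map_mx polyC (B *m B^T)) 0 0 D.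
  rewrite /char_poly_mx map_trmx mulmxBr mul_mx_scalar mulmxBl -scalemxAl.
  rewrite -!map_mxM PP PAP.
  rewrite !map_block_mx !map_mx0 scale_block_mx !scaler0 map_mxZ /=.
  by rewrite opp_block_mx add_block_mx !subr0 scalerBl.
have := congr1 determinant key.
rewrite !det_mulmx det_tr det_ublock detZ -/(char_poly A) !det_map_mx /=.
move=> H.
have dDl : ~~ root (\det D) l.
  rewrite /root -[_.[l]]/(horner_eval l _) -det_map_mx.
  have hc : forall (m1 m2 : nat) (M : 'M[R]_(m1, m2)),
      map_mx (horner_eval l) (map_mx polyC M) = M.
    by move=> m1 m2 M; apply/matrixP => i j; rewrite !mxE [LHS]horner_evalE hornerC.
  have -> : map_mx (horner_eval l) D = - (C *m (A - l%:M) *m C^T).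
    rewrite map_mxB map_mxZ !hc [X in X *: (C *m C^T)]horner_evalE hornerX.
    by rewrite mulmxBr mul_mx_scalar mulmxBl -scalemxAl opprB.
  rewrite -scaleN1r detZ mulf_eq0 negb_or dCA andbT.
  by rewrite expf_eq0 oppr_eq0 oner_eq0 andbF.
have cP : ((\det P) ^+ 2)%:P != 0 :> {poly R} by rewrite polyC_eq0 expf_neq0.
have nzD : \det D != 0 by apply: contraNneq dDl => ->; rewrite root0.
have : mup l (char_poly A * ((\det P) ^+ 2)%:P) =
       mup l (('X - l%:P) ^+ p * ((\det (B *m B^T))%:P * \det D)).
  congr (mup l _); rewrite mulrA -H rmorphXn /= expr2 mulrA.
  by congr (_ * _); rewrite mulrC.
rewrite mupMl; last by rewrite rootC expf_neq0.
rewrite mupM ?expf_neq0 ?polyXsubC_eq0 // ?mulf_neq0 ?polyC_eq0 //.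
have nr : ~~ root ((\det (B *m B^T))%:P * \det D) l.
  by rewrite rootM rootC negb_or dB.
by rewrite mup_XsubCX eqxx (mupNroot nr) addn0.
Qed.

Lemma alg_le_geo n (A : 'M[R]_n) l : A^T = A ->
  (mup l (char_poly A) <= \rank (eigenspace A l))%N.
Proof.
move=> sA.
set E := eigenspace A l.
pose B := row_base E; pose F := kermx B^T; pose C := row_base F.
have rF : \rank F = (n - \rank E)%N by rewrite mxrank_ker mxrank_tr (eq_row_base E).
have e : (\rank E + \rank F)%N = n.
  by rewrite rF subnKC // rank_leq_col.
have BA : B *m A = l *: B.
  by apply/eigenspaceP; rewrite (eq_row_base E) submx_refl.
have CB : C *m B^T = 0 by apply/sub_kermxP; rewrite (eq_row_base F) submx_refl.
have BC : B *m C^T = 0 by rewrite -[B]trmxK -trmx_mul CB trmx0.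
have dB : \det (B *m B^T) != 0 by apply: gram_det; exact: row_base_free.
have dC : \det (C *m C^T) != 0 by apply: gram_det; exact: row_base_free.
suff dCA : \det (C *m (A - l%:M) *m C^T) != 0.
  by rewrite (alg_core e sA BA BC dB dC dCA).
apply/negP => /det0P [v vn0 vM].
pose w := v *m C; pose y := w *m (A - l%:M).
have sAl : (A - l%:M)^T = A - l%:M by rewrite linearB /= sA tr_scalar_mx.
have yB : y *m B^T = 0.
  rewrite /y -mulmxA -sAl -trmx_mul mulmxBr BA mul_mx_scalar subrr trmx0.
  by rewrite mulmx0.
have : (y <= C)%MS by rewrite (eq_row_base F); apply/sub_kermxP.
case/submxP => z yz.
have yC : y *m C^T = 0 by rewrite /y /w -vM !mulmxA.
have y0 : y = 0.
  by apply: self_dot0; rewrite {2}yz trmx_mul mulmxA yC mul0mx.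
have : (w <= B)%MS.
  by rewrite (eq_row_base E); apply/sub_kermxP; exact: y0.
case/submxP => t wt.
have wB : w *m B^T = 0 by rewrite /w -mulmxA CB mulmx0.
have t0 : t = 0.
  by apply: (det_cancel dB); rewrite mulmxA -wt.
have w0 : w = 0 by rewrite wt t0 mul0mx.
move/eqP: w0; rewrite mulmx_free_eq0; last exact: row_base_free.
by rewrite (negbTE vn0).
Qed.

End Alg.
Section Comb.
Variables (R : realType) (n : nat) (A : 'M[R]_n) (l : R).
Hypothesis sA : A^T = A.
Hypothesis acA : acyclic A.

Lemma Asym i j : A i j = A j i.
Proof. by rewrite -{1}sA mxE. Qed.

Lemma adj_sym : symmetric (adjA A).
Proof. by move=> x y; rewrite /adjA eq_sym Asym. Qed.

Lemma adjS_sym (S : {set 'I_n}) : symmetric (adjS A S).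
Proof. by move=> x y; rewrite /adjS adj_sym andbCA. Qed.

Lemma adjS_adj (S : {set 'I_n}) x y : adjS A S x y -> adjA A x y.
Proof. by case/and3P. Qed.

Lemma path_adjS_all (S : {set 'I_n}) x p : path (adjS A S) x p -> all (fun z => z \in S) p.
Proof.
elim: p x => //= y p IH x /andP [/and3P [_ yS _] hp].
by rewrite yS (IH y hp).
Qed.

Lemma path_adjS_of (S : {set 'I_n}) x p : path (adjA A) x p -> x \in S ->
  all (fun z => z \in S) p -> path (adjS A S) x p.
Proof.
elim: p x => //= y p IH x /andP [hxy hp] xS /andP [yS hall].
by rewrite /adjS xS yS hxy /= (IH y hp yS hall).
Qed.

Lemma path_adjS_adj (S : {set 'I_n}) x p : path (adjS A S) x p -> path (adjA A) x p.
Proof. by apply: sub_path => a b; exact: adjS_adj. Qed.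

Lemma no_cycle (S : {set 'I_n}) v c c' : v \notin S -> c != c' -> adjA A v c -> adjA A v c' ->
  connect (adjS A S) c c' -> False.
Proof.
move=> vS cc' avc avc' /connectP [p hp ec'].
move: ec'; case: (shortenP hp) => p' hp' up' _ ec'.
have allS := path_adjS_all hp'.
have vp : v \notin c :: p'.
  rewrite inE negb_or; apply/andP; split.
    by case/andP: avc.
  by apply/negP => /(allP allS); rewrite (negbTE vS).
have hc : ucycle (adjA A) [:: v, c & p'].
  rewrite /ucycle /= avc rcons_path (path_adjS_adj hp') -ec' adj_sym avc' /=.
  by rewrite -/(uniq (c :: p')) up' andbT; move: vp; rewrite inE.
have := acA hc.
case: p' {hp' up' allS vp hc} ec' => [|z p'] //= ec'.
by rewrite ec' eqxx in cc'.
Qed.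


Lemma comp_refl (S : {set 'I_n}) x : x \in component A S x.
Proof. by rewrite inE connect0. Qed.

Lemma comp_sub (S : {set 'I_n}) x y : x \in S -> y \in component A S x -> y \in S.
Proof.
rewrite inE => xS /connectP [p hp ->].
case: p hp => // z p hp /=.
by have /allP := path_adjS_all hp; apply; exact: mem_last.
Qed.

Lemma comp_closed (S : {set 'I_n}) x y z : x \in S -> y \in component A S x ->
  z \in S -> adjA A y z -> z \in component A S x.
Proof.
move=> xS hy zS ayz; have yS := comp_sub xS hy.
move: hy; rewrite !inE => hy; apply: (connect_trans hy); apply: connect1.
by rewrite /adjS yS zS.
Qed.

Lemma path_conn_avoid w x p : path (adjA A) x p -> w \notin x :: p ->
  forall z, z \in x :: p -> connect (adjS A (~: [set w])) x z.
Proof.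
move=> hp wp; apply: path_connect; apply: path_adjS_of hp _ _.
  by rewrite !inE; apply: contraNneq wp => ->; rewrite mem_head.
apply/allP => z zp; rewrite !inE; apply: contraNneq wp => <-.
by rewrite inE zp orbT.
Qed.

Lemma upath_uniq u v p q : is_upath A u v p -> is_upath A u v q -> p = q.
Proof.
elim: p u q => [|x p IH] u [|y q] //.
- move=> /and3P [_ /eqP /= luv _] /and3P [_ /eqP /= lq /andP [uyq _]].
  by move: uyq; rewrite luv -lq mem_last.
- move=> /and3P [_ /eqP /= lp /andP [uxp _]] /and3P [_ /eqP /= luv _].
  by move: uxp; rewrite luv -lp mem_last.
move=> /and3P [/= /andP [aux hp] lp up] /and3P [/= /andP [auy hq] lq uq].
case: (eqVneq x y) => [exy | nxy].
  subst y; congr (_ :: _); apply: (IH x).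
    by rewrite /is_upath hp lp; case/andP: up.
  by rewrite /is_upath hq lq; case/andP: uq.
exfalso; apply: (@no_cycle (~: [set u]) u x y) => //.
  by rewrite !inE eqxx.
have hcon : connect_sym (adjS A (~: [set u])) by apply: sym_connect_sym; exact: adjS_sym.
have cx : connect (adjS A (~: [set u])) x v.
  rewrite -(eqP lp); apply: (path_conn_avoid hp); first by case/andP: up.
  exact: mem_last.
have cy : connect (adjS A (~: [set u])) y v.
  rewrite -(eqP lq); apply: (path_conn_avoid hq); first by case/andP: uq.
  exact: mem_last.
by apply: (connect_trans cx); rewrite hcon.
Qed.

Lemma upath_exists (S : {set 'I_n}) u v : u \in S -> v \in component A S u ->
  exists p, is_upath A u v p /\ all (fun z => z \in component A S u) p.
Proof.
rewrite inE => uS /connectP [p hp ->].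
case: (shortenP hp) => p' hp' up' _; exists p'; split.
  by rewrite /is_upath (path_adjS_adj hp') eqxx up'.
apply/allP => z zp; rewrite inE; apply: (path_connect hp').
by rewrite inE zp orbT.
Qed.

Lemma upathP (S : {set 'I_n}) u v : u \in S -> v \in component A S u ->
  is_upath A u v (upath A u v) /\
  all (fun z => z \in component A S u) (upath A u v).
Proof.
move=> uS vC; have [p [hp ha]] := upath_exists uS vC.
have hu : is_upath A u v (upath A u v).
  exact: (epsilon_spec (inhabits [::]) (fun p => is_upath A u v p) (ex_intro _ p hp)).
by rewrite (upath_uniq hu hp).
Qed.

End Comb.
Section Paths.
Variables (R : realType) (n : nat) (A : 'M[R]_n).
Hypothesis sA : A^T = A.
Hypothesis acA : acyclic A.
Variables (S : {set 'I_n}) (u : 'I_n).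
Hypothesis uS : u \in S.
Local Notation C := (component A S u).
Local Notation up := (upath A u).

Lemma up_is v : v \in C -> is_upath A u v (up v).
Proof. by move=> vC; case: (upathP sA acA uS vC). Qed.

Lemma up_sub v : v \in C -> all (fun z => z \in C) (up v).
Proof. by move=> vC; case: (upathP sA acA uS vC). Qed.

Lemma up_nil : up u = [::].
Proof.
apply: (upath_uniq sA acA (up_is (comp_refl _ _ _))).
by rewrite /is_upath /= eqxx.
Qed.

Lemma wt_rcons x s v :
  \prod_(e <- zip (x :: rcons s v) (rcons s v)) A e.1 e.2 =
  (\prod_(e <- zip (x :: s) s) A e.1 e.2) * A (last x s) v.
Proof.
elim: s x => [|y s IH] x /=; first by rewrite !big_cons !big_nil mul1r mulr1.
by rewrite !big_cons IH mulrA.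
Qed.

Lemma up_pred v : v \in C -> v != u ->
  exists2 p, p \in C & [/\ adjA A p v, up v = rcons (up p) v & v \notin u :: up p].
Proof.
move=> vC vu; have := up_is vC; have := up_sub vC.
case/lastP: (up v) => [|q w].
  by move=> _ /and3P [_ /eqP /= uv _]; rewrite uv eqxx in vu.
move=> hall /and3P [hp hl hu].
rewrite last_rcons in hl; move/eqP: hl => ?; subst w.
move: hp; rewrite rcons_path => /andP [hp apv].
move: hu; rewrite -rcons_cons rcons_uniq => /andP [vq uq].
have pC : last u q \in C.
  have : last u q \in u :: q := mem_last u q.
  rewrite inE => /orP [/eqP -> | pq]; first exact: comp_refl.
  by apply: (allP hall); rewrite mem_rcons inE pq orbT.
exists (last u q) => //.
have hq : is_upath A u (last u q) q by rewrite /is_upath hp eqxx uq.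
by rewrite (upath_uniq sA acA (up_is pC) hq); split.
Qed.

Lemma up_succ v c : v \in C -> c \in S -> adjA A v c -> c \notin u :: up v ->
  c \in C /\ up c = rcons (up v) c.
Proof.
move=> vC cS avc cn.
have cC : c \in C by apply: (comp_closed uS vC cS avc).
split => //.
have /and3P [hp /eqP hl hu] := up_is vC.
have hc : is_upath A u c (rcons (up v) c).
  by rewrite /is_upath rcons_path hp hl avc last_rcons eqxx -rcons_cons rcons_uniq cn hu.
exact: (upath_uniq sA acA (up_is cC) hc).
Qed.

Lemma up_pred_uniq v p c : v \in C -> p \in C -> adjA A p v ->
  up v = rcons (up p) v -> v \notin u :: up p ->
  c \in u :: up v -> adjA A v c -> c = p.
Proof.
move=> vC pC apv hv vn cin avc.
have cin' : c \in u :: up p.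
  move: cin; rewrite hv -rcons_cons mem_rcons inE => /orP [/eqP cv | //].
  by move: avc; rewrite cv /adjA eqxx.
apply/eqP; apply/negP => /negP cp.
apply: (@no_cycle _ _ A sA acA (~: [set v]) v c p) => //.
- by rewrite !inE eqxx.
- by rewrite adj_sym.
have /and3P [hp /eqP hl _] := up_is pC.
have hc := path_conn_avoid hp vn.
have hsym : connect_sym (adjS A (~: [set v])) by apply: sym_connect_sym; exact: adjS_sym.
have h1 : connect (adjS A (~: [set v])) c u by rewrite hsym; apply: hc.
have h2 : connect (adjS A (~: [set v])) u p by apply: hc; rewrite -{1}hl mem_last.
exact: connect_trans h1 h2.
Qed.

End Paths.
Section NSsec.
Variables (R : realType) (n : nat) (A : 'M[R]_n) (l : R).

Definition NS (S : {set 'I_n}) : 'M[R]_n := locked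
  (\matrix_(i, j) if (i \in S) && (j \in S) then l * (i == j)%:R - A i j
                 else (i == j)%:R).

Lemma NSE (S : {set 'I_n}) i j : NS S i j =
  if (i \in S) && (j \in S) then l * (i == j)%:R - A i j else (i == j)%:R.
Proof. by rewrite /NS -lock mxE. Qed.
Definition ph S := \det (NS S).

Lemma NS_out (S : {set 'I_n}) i j : (i \notin S) || (j \notin S) -> NS S i j = (i == j)%:R.
Proof. by rewrite NSE => /orP [] /negbTE ->; rewrite ?andbF. Qed.

Lemma NS_in (S : {set 'I_n}) i j : i \in S -> j \in S -> NS S i j = l * (i == j)%:R - A i j.
Proof. by rewrite NSE => -> ->. Qed.

Lemma phiE (S : {set 'I_n}) : phi A S l = ph S.
Proof.
rewrite /phi horner_char /ph (@det_sub_id _ _ S (NS S)); last exact: NS_out.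
congr (\det _); apply/matrixP => i j; rewrite !mxE NSE !enum_valP /=.
by rewrite (inj_eq enum_val_inj) mulr_natr.
Qed.

Lemma NS_mulE (Z : {set 'I_n}) (K : 'M[R]_n) :
  (forall k j, k \in Z -> K k j = (k == j)%:R) ->
  NS Z *m K = \matrix_(i, j) if i \in Z then NS Z i j else K i j.
Proof.
move=> hK; apply/matrixP => i j; rewrite !mxE.
case: ifP => iZ.
  rewrite (bigD1 j) //= big1 ?addr0.
    case jZ: (j \in Z); first by rewrite (hK j j jZ) eqxx mulr1.
    rewrite NS_out ?jZ ?orbT //; case: eqP => [ij|]; last by rewrite mul0r.
    by move: iZ; rewrite ij jZ.
  move=> k kj; case kZ: (k \in Z); first by rewrite (hK k j kZ) (negbTE kj) mulr0.
  rewrite NS_out ?kZ ?orbT //; case: eqP => [ik|]; last by rewrite mul0r.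
  by move: iZ; rewrite ik kZ.
rewrite (bigD1 i) //= NS_out ?iZ // eqxx mul1r big1 ?addr0 // => k ki.
by rewrite NS_out ?iZ // eq_sym (negbTE ki) mul0r.
Qed.

Lemma cofactor_eq (M M' : 'M[R]_n) i j :
  (forall a b, a != i -> b != j -> M a b = M' a b) -> cofactor M i j = cofactor M' i j.
Proof.
move=> H; rewrite /cofactor; congr (_ * \det _); apply/matrixP => a b.
by rewrite !mxE; apply: H; rewrite eq_sym neq_lift.
Qed.

Lemma det_unit_row (M : 'M[R]_n) v c :
  (forall j, M v j = (c == j)%:R) -> \det M = cofactor M v c.
Proof.
move=> H; rewrite (expand_det_row _ v) (bigD1 c) //= big1 ?addr0 => [|j jc].
  by rewrite H eqxx mul1r.
by rewrite H eq_sym (negbTE jc) mul0r.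
Qed.

Lemma cof_NS (S : {set 'I_n}) v : cofactor (NS S) v v = ph (S :\ v).
Proof.
rewrite /ph (@det_unit_row (NS (S :\ v)) v v) => [|j]; last first.
  by rewrite NS_out // !inE eqxx.
by apply: cofactor_eq => a b av bv; rewrite !NSE !inE av bv.
Qed.

Lemma row_unit_clear (M : 'M[R]_n) v : (forall j, M v j = (v == j)%:R) ->
  \det M = \det (\matrix_(i, j) if (i == v) || (j == v) then (i == j)%:R else M i j).
Proof.
move=> H; rewrite (det_unit_row H) (@det_unit_row _ v v) => [|j]; last first.
  by rewrite mxE eqxx.
by apply: cofactor_eq => a b av bv; rewrite mxE (negbTE av) (negbTE bv).
Qed.

End NSsec.
Section NS2.
Variables (R : realType) (n : nat) (A : 'M[R]_n) (l : R).
Hypothesis sA : A^T = A.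
Hypothesis acA : acyclic A.
Local Notation NS := (NS A l).
Local Notation ph := (ph A l).

Lemma ph_mul_disj (S1 S2 : {set 'I_n}) : [disjoint S1 & S2] ->
  (forall i j, i \in S1 -> j \in S2 -> A i j = 0) ->
  ph (S1 :|: S2) = ph S1 * ph S2.
Proof.
move=> dis h0.
have d1 x : x \in S1 -> x \in S2 = false by move=> xS; rewrite (disjointFr dis xS).
have d2 x : x \in S2 -> x \in S1 = false by move=> xS; rewrite (disjointFl dis xS).
rewrite /ph.
have -> : NS (S1 :|: S2) = NS S2 *m NS S1.
  rewrite NS_mulE => [|k j kS2]; last by rewrite NS_out // d2.
  apply/matrixP => i j; rewrite mxE !NSE !inE.
  case iS2: (i \in S2).
    rewrite (d2 _ iS2) /=; case jS2: (j \in S2); rewrite ?orbT //=.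
    case jS1: (j \in S1) => //=.
    have ij : (i == j) = false by apply: contraFF jS2 => /eqP <-.
    by rewrite ij mulr0 sub0r Asym // (h0 j i jS1 iS2) oppr0.
  case iS1: (i \in S1) => //=.
  case jS1: (j \in S1) => //=; case jS2: (j \in S2) => //=.
  have ij : (i == j) = false by apply: contraFF iS2 => /eqP ->.
  by rewrite ij mulr0 sub0r (h0 i j iS1 jS2) oppr0.
by rewrite det_mulmx mulrC.
Qed.


Lemma det_xrow_neg (M : 'M[R]_n) v c : v != c -> \det (xrow v c M) = - \det M.
Proof.
move=> vc; rewrite xrowE det_mulmx /tperm_mx det_perm odd_tperm vc.
by rewrite expr1 mulN1r.
Qed.

Lemma cof_adj (S : {set 'I_n}) v c : v \in S -> c \in S -> adjA A v c ->
  cofactor (NS S) v c = A c v * ph (S :\ v :\ c).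
Proof.
move=> vS cS avc.
have vc : v != c by case/andP: avc.
have cv : c != v by rewrite eq_sym.
pose M := \matrix_(i, j) if i == v then (c == j)%:R else NS S i j.
have -> : cofactor (NS S) v c = \det M.
  rewrite (@det_unit_row _ _ M v c) => [|j]; last by rewrite mxE eqxx.
  by apply: cofactor_eq => a b av _; rewrite mxE (negbTE av).
pose M1 := \matrix_(i, j) if i == v then (c == j)%:R
           else if (i == c) && (j == v) then 0 else NS S i j.
pose M2 := \matrix_(i, j) if i == v then (c == j)%:R
           else if i == c then (v == j)%:R else NS S i j.
have eM : \det M = 1 * \det M1 + NS S c v * \det M2.
  apply: (@determinant_multilinear _ _ M M1 M2 c).
  - apply/rowP => j; rewrite !mxE (negbTE cv) eqxx /=.
    case: (eqVneq j v) => [->|jv] /=; first by rewrite mul1r add0r mulr1.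
    by rewrite mulr0 addr0 mul1r.
  - apply/matrixP => a b; rewrite !mxE.
    by rewrite (negbTE (_ : lift c a != c)) // eq_sym neq_lift.
  - apply/matrixP => a b; rewrite !mxE.
    by rewrite (negbTE (_ : lift c a != c)) // eq_sym neq_lift.
have dM2 : \det M2 = - ph (S :\ v :\ c).
  apply: (canRL (@opprK _)); rewrite -(@det_xrow_neg M2 v c vc).
  rewrite (@row_unit_clear _ _ _ v) => [|j]; last first.
    by rewrite !mxE tpermL (negbTE cv) eqxx.
  rewrite (@row_unit_clear _ _ _ c) => [|j]; last first.
    rewrite !mxE (negbTE cv) /= tpermR eqxx.
    by case: (eqVneq j v) => [->|//]; rewrite (negbTE cv).
  rewrite /ph; congr (\det _); apply/matrixP => i j; rewrite !mxE !NSE !inE.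
  case: (eqVneq i c) => [->|ic] /=; first by [].
  case: (eqVneq j c) => [->|jc] /=; first by rewrite andbF.
  case: (eqVneq i v) => [->|iv] /=; first by [].
  case: (eqVneq j v) => [->|jv] /=; first by rewrite andbF.
  have vi : v != i by rewrite eq_sym.
  have ci : c != i by rewrite eq_sym.
  by rewrite (tpermD vi ci) (negbTE iv) (negbTE ic).
have dM1 : \det M1 = 0.
  pose Z := component A (S :\ v) c.
  pose X := S :\: Z.
  have cSv : c \in S :\ v by rewrite !inE cv.
  have cZ : c \in Z by exact: comp_refl.
  have ZS z : z \in Z -> z \in S :\ v by move=> zZ; exact: (comp_sub cSv zZ).
  have vZ : v \notin Z by apply/negP => /ZS; rewrite !inE eqxx.
  have f1 i j : i \in Z -> j \in S :\ v -> j \notin Z -> A i j = 0.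
    move=> iZ jS jZ; have ij : i != j by apply: contraNneq jZ => <-.
    apply/eqP; apply: contraNT jZ => aij.
    by apply: (comp_closed cSv iZ jS); rewrite /adjA aij ij.
  have f2 i : i \in Z -> i != c -> A i v = 0.
    move=> iZ ic; apply/eqP/negP => /negP aiv.
    apply: (@no_cycle _ _ A sA acA (S :\ v) v c i) => //.
    - by rewrite !inE eqxx.
    - by rewrite eq_sym.
    - rewrite /adjA Asym // aiv andbT; apply: contraNneq vZ => ->; exact: iZ.
    - by move: iZ; rewrite inE.
  pose K := \matrix_(i, j) if i == v then (c == j)%:R else NS X i j.
  have eM1 : M1 = NS Z *m K.
    rewrite NS_mulE => [|k j kZ]; last first.
      rewrite mxE (negbTE (_ : k != v)); last by apply: contraNneq vZ => <-.
      by rewrite NS_out // in_setD kZ.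
    apply/matrixP => i j; rewrite !mxE.
    case iZ: (i \in Z).
      have iv : (i == v) = false by apply: contraNF vZ => /eqP <-.
      rewrite iv /=.
      have iS : i \in S by have := ZS _ iZ; rewrite !inE => /andP [].
      case: (eqVneq j v) => [->|jv].
        rewrite andbT [NS Z i v]NS_out; last by rewrite vZ orbT.
        rewrite iv NS_in // iv mulr0 sub0r.
        by case: (eqVneq i c) => // ic; rewrite (f2 _ iZ ic) oppr0.
      rewrite andbF /=.
      have jSv : j \in S -> j \in S :\ v by move=> jS; rewrite !inE jv jS.
      case jZ: (j \in Z).
        by rewrite !NS_in // ; case/setD1P: (ZS _ jZ).
      have ij : (i == j) = false by apply: contraFF jZ => /eqP <-.
      rewrite [NS Z i j]NS_out ?jZ ?orbT // ij.
      case jS: (j \in S); last by rewrite NS_out ?jS ?orbT // ij.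
      by rewrite NS_in // ij mulr0 sub0r f1 ?oppr0 ?jZ ?jSv.
    case: (eqVneq i v) => [_|iv] //=.
    have ic : (i == c) = false by apply: contraFF iZ => /eqP ->.
    rewrite ic /=.
    case iS: (i \in S); last by rewrite !NS_out ?iS // in_setD iS andbF.
    have iX : i \in X by rewrite in_setD iZ iS.
    case jX: (j \in X).
      by rewrite !NS_in //; move: jX; rewrite in_setD => /andP [].
    have ij : (i == j) = false by apply: contraFF jX => /eqP <-.
    rewrite [NS X i j]NS_out ?jX ?orbT // ij.
    case jS: (j \in S); last by rewrite NS_out ?jS ?orbT // ij.
    have jZ : j \in Z by move: jX; rewrite in_setD jS andbT => /negbFE.
    rewrite NS_in // ij mulr0 sub0r Asym // f1 ?oppr0 ?iZ //.
    by rewrite !inE iv iS.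
  by rewrite eM1 det_mulmx (@determinant_alternate _ _ K v c) ?mulr0 // => j;
     rewrite !mxE eqxx (negbTE cv) NS_out // in_setD cZ.
by rewrite eM dM1 dM2 mulr0 add0r NS_in // (negbTE cv) mulr0 sub0r mulrNN.
Qed.


Lemma ph_expand (S : {set 'I_n}) v : v \in S ->
  ph S = (l - A v v) * ph (S :\ v) -
         \sum_(c in S | adjA A v c) A v c * A c v * ph (S :\ v :\ c).
Proof.
move=> vS; rewrite {1}/ph (expand_det_row _ v) (bigD1 v) //= cof_NS NS_in // eqxx mulr1.
congr (_ + _); rewrite -sumrN big_mkcond [RHS]big_mkcond /=; apply: eq_bigr => j _.
case: (eqVneq j v) => [->|jv] /=; first by rewrite /adjA eqxx andbF.
have vj : (v == j) = false by apply/negbTE; rewrite eq_sym.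
case jS: (j \in S); last by rewrite NS_out ?jS ?orbT // vj mul0r.
case avj: (adjA A v j).
  by rewrite cof_adj // NS_in // vj mulr0 sub0r mulNr mulrA.
have Avj : A v j = 0 by move: avj; rewrite /adjA vj /= => /negbFE/eqP.
by rewrite NS_in // vj mulr0 sub0r Avj oppr0 mul0r.
Qed.

End NS2.
Section Verif.
Variables (R : realType) (n : nat) (A : 'M[R]_n) (l : R).
Hypothesis sA : A^T = A.
Hypothesis acA : acyclic A.
Local Notation NS := (NS A l).
Local Notation ph := (ph A l).

Lemma NS_row_sum (T : {set 'I_n}) v (z : 'cV[R]_n) : v \in T ->
  (forall j, j \notin T -> z j 0 = 0) ->
  (NS T *m z) v 0 = (l - A v v) * z v 0 - \sum_(j in T | adjA A v j) A v j * z j 0.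
Proof.
move=> vT hz; rewrite mxE (bigD1 v) //= NS_in // eqxx mulr1.
congr (_ + _); rewrite -sumrN big_mkcond [RHS]big_mkcond /=; apply: eq_bigr => j _.
case: (eqVneq j v) => [->|jv] /=; first by rewrite /adjA eqxx andbF.
have vj : (v == j) = false by apply/negbTE; rewrite eq_sym.
case jT: (j \in T); last by rewrite hz ?jT // mulr0.
case avj: (adjA A v j).
  by rewrite NS_in // vj mulr0 sub0r mulNr.
have Avj : A v j = 0 by move: avj; rewrite /adjA vj /= => /negbFE/eqP.
by rewrite NS_in // vj mulr0 sub0r Avj oppr0 mul0r.
Qed.

Lemma NS_out_col (T : {set 'I_n}) v (z : 'cV[R]_n) : v \notin T ->
  (NS T *m z) v 0 = z v 0.
Proof.
move=> vT; rewrite mxE (bigD1 v) //= NS_out ?vT // eqxx mul1r big1 ?addr0 // => j jv.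
by rewrite NS_out ?vT // eq_sym (negbTE jv) mul0r.
Qed.

Variables (S : {set 'I_n}) (u : 'I_n).
Hypothesis uS : u \in S.
Local Notation C := (component A S u).
Local Notation up := (upath A u).

Definition beta : 'cV[R]_n := locked
  (\col_v (if v \in C then pathweight A u v * ph (C :\: pathset A u v) else 0)).

Lemma betaE v : beta v 0 = if v \in C then pathweight A u v * ph (C :\: pathset A u v) else 0.
Proof. by rewrite /beta -lock mxE. Qed.

Lemma beta_u : beta u 0 = ph (C :\ u).
Proof.
rewrite betaE comp_refl /pathweight /pathset (up_nil sA acA uS) big_nil mul1r.
by congr ph; apply/setP => z; rewrite !inE.
Qed.

Lemma verif : (NS C *m beta) = \col_v ((v == u)%:R * ph C).
Proof.
apply/matrixP => v k; rewrite (ord1 k) [RHS]mxE.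
case vC: (v \in C); last first.
  rewrite NS_out_col ?vC // betaE vC.
  by case: eqP => [vu|]; [move: vC; rewrite vu comp_refl | rewrite mul0r].
rewrite NS_row_sum // => [|j]; last by rewrite betaE => /negbTE ->.
case: (eqVneq v u) => [->|vu].
  rewrite mul1r (ph_expand l sA acA (comp_refl _ _ _)) beta_u.
  congr (_ - _); apply: eq_bigr => j /andP [jC auj].
  have jn : j \notin u :: up u.
    by rewrite (up_nil sA acA uS) inE eq_sym; case/andP: auj.
  have [_ hj] := up_succ sA acA uS (comp_refl _ _ _) (comp_sub uS jC) auj jn.
  rewrite betaE jC /pathweight /pathset hj (up_nil sA acA uS) /=.
  rewrite big_cons big_nil mulr1 /= [A j u]Asym // mulrA; congr (_ * ph _).
  by apply/setP => z; rewrite !inE negb_or andbA [(z != j) && _]andbC.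
have [p pC [apv hv vn]] := up_pred sA acA uS vC vu.
have /and3P [_ /eqP lp _] := up_is sA acA uS pC.
have /and3P [_ /eqP lv _] := up_is sA acA uS vC.
set Pp := pathset A u p.
have PvE : pathset A u v = v |: Pp.
  rewrite /Pp /pathset hv; apply/setP => z; rewrite !inE mem_rcons !inE.
  by rewrite orbCA.
have WvE : pathweight A u v = pathweight A u p * A p v.
  by rewrite /pathweight hv wt_rcons lp.
pose S' := C :\: Pp.
have vS' : v \in S' by rewrite in_setD vC andbT /Pp /pathset inE.
have E := ph_expand l sA acA vS'.
have S'v : S' :\ v = C :\: pathset A u v.
  apply/setP => z; rewrite PvE !inE.
  by case: (z == v); case: (z == u); case: (z \in up p).
have notin j : j \in C -> adjA A v j -> j != p -> j \notin u :: up v.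
  move=> jC avj jp; apply/negP => jin.
  by move: jp; rewrite (up_pred_uniq sA acA uS vC pC apv hv vn jin avj) eqxx.
rewrite (bigD1 p) /=; last by rewrite pC adj_sym.
have -> : \sum_(j | (j \in C) && adjA A v j && (j != p)) A v j * beta j 0 =
    pathweight A u v * \sum_(c in S' | adjA A v c) A v c * A c v * ph (S' :\ v :\ c).
  rewrite big_distrr; apply: eq_big => j.
    rewrite in_setD; case jC: (j \in C); rewrite ?andbF ?andbT //=.
    case avj: (adjA A v j); rewrite ?andbF //=.
    case: (eqVneq j p) => [->|jp] /=.
      by rewrite /Pp /pathset inE -{1}lp mem_last.
    rewrite andbT; apply/esym/negP; rewrite /Pp /pathset inE => jin.
    by move/negP: (notin j jC avj jp); apply; rewrite hv -rcons_cons mem_rcons inE jin orbT.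
  move=> /andP [/andP [jC avj] jp].
  have jS : j \in S by apply: (comp_sub uS jC).
  have [_ hj] := up_succ sA acA uS vC jS avj (notin j jC avj jp).
  rewrite betaE jC.
  have -> : pathweight A u j = pathweight A u v * A v j.
    by rewrite /pathweight hj wt_rcons lv.
  have -> : C :\: pathset A u j = S' :\ v :\ j.
    rewrite S'v; apply/setP => z.
    rewrite /pathset hj !inE mem_rcons !inE.
    by case: (z == j); case: (z == u); case: (z \in up v).
  rewrite [A j v]Asym //=; ring.
rewrite !betaE vC pC -/Pp -/S' -S'v E WvE [A v p]Asym //; ring.
Qed.

End Verif.
Lemma sum_delta (R : realType) n (x : 'rV[R]_n) b :
  \sum_a x 0 a * (a == b)%:R = x 0 b.
Proof.
rewrite (bigD1 b) //= eqxx mulr1 big1 ?addr0 // => a ab.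
by rewrite (negbTE ab) mulr0.
Qed.

Lemma exists_vec (R : realType) n (A : 'M[R]_n) l k (u : 'I_k -> 'I_n) (i : 'I_k) :
  A^T = A -> (k <= mup l (char_poly A))%N ->
  exists2 x : 'rV[R]_n, x *m A = l *: x & x != 0 /\ (forall j, j != i -> x 0 (u j) = 0).
Proof.
case: k u i => [|k] u i; first by case: i.
move=> sA hk.
have hE := alg_le_geo l sA.
set E := eigenspace A l in hE.
pose K : 'M[R]_(n, k) := \matrix_(a, j) (a == u (lift i j))%:R.
have rK := rank_leq_col K.
have rker : \rank (kermx K) = (n - \rank K)%N by rewrite mxrank_ker.
have rsum := mxrank_sum_cap E (kermx K).
have rs := rank_leq_col (E + kermx K)%MS.
have rE := rank_leq_col E.
have : \rank (E :&: kermx K)%MS != 0%N.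
  move: rsum rs rE hE hk rK rker.
  move: (\rank (E + kermx K)) (\rank (E :&: kermx K)) (\rank E) (\rank (kermx K)) (\rank K) (mup l (char_poly A)).
  move=> a b c d e f; lia.
rewrite mxrank_eq0 => /rowV0Pn [x hx xn0].
rewrite sub_capmx in hx; case/andP: hx => hxE hxK.
exists x; first by apply/eigenspaceP.
split => // j ji.
move/sub_kermxP: hxK => /matrixP hK.
case: (unliftP i j) => [j' ->|ej]; last by rewrite ej eqxx in ji.
have := hK 0 j'; rewrite !mxE.
have -> : \sum_a x 0 a * K a j' = \sum_a x 0 a * (a == u (lift i j'))%:R.
  by apply: eq_bigr => a _; rewrite /K mxE.
by rewrite sum_delta.
Qed.
Section MainI.
Variables (R : realType) (n : nat) (A : 'M[R]_n) (l : R).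
Hypothesis sA : A^T = A.
Hypothesis acA : acyclic A.
Local Notation NS := (NS A l).
Local Notation ph := (ph A l).

Lemma col_cancel (M : 'M[R]_n) (z : 'cV[R]_n) : \det M != 0 -> M *m z = 0 -> z = 0.
Proof.
move=> hM hz; have uM : M \in unitmx by rewrite unitmxE unitfE.
by rewrite -(mulKmx uM z) hz mulmx0.
Qed.

Lemma NS_supp (T : {set 'I_n}) (z : 'cV[R]_n) v :
  (forall j, j \notin T -> z j 0 = 0) -> v \in T ->
  (NS T *m z) v 0 = ((l%:M - A) *m z) v 0.
Proof.
move=> hz vT; rewrite !mxE; apply: eq_bigr => j _.
case jT: (j \in T); last by rewrite hz ?jT // !mulr0.
by rewrite NS_in // !mxE mulr_natr.
Qed.

Lemma NS_ker (T : {set 'I_n}) (z : 'cV[R]_n) :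
  (forall j, j \notin T -> z j 0 = 0) ->
  (forall v, v \in T -> ((l%:M - A) *m z) v 0 = 0) -> NS T *m z = 0.
Proof.
move=> hz hv; apply/matrixP => v k; rewrite (ord1 k) [RHS]mxE.
case vT: (v \in T); first by rewrite NS_supp // hv.
by rewrite NS_out_col ?vT // hz ?vT.
Qed.

Lemma main_i (U : {set 'I_n}) (w : 'I_n) (x : 'cV[R]_n) :
  w \in U -> ph (~: U) != 0 ->
  A *m x = l *: x -> x != 0 -> (forall j, j \in U :\ w -> x j 0 = 0) ->
  let b := beta A l (~: (U :\ w)) w in
  b w 0 = ph (component A (~: (U :\ w)) w :\ w) /\
  b w 0 != 0 /\ A *m b = l *: b.
Proof.
move=> wU phU Ax xn0 xU b.
set S := ~: (U :\ w).
have wS : w \in S by rewrite !inE eqxx.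
set C := component A S w.
have wC : w \in C := comp_refl _ _ _.
have CS z : z \in C -> z \in S by exact: comp_sub.
pose O := S :\: C.
have noedge i j : i \in O -> j \in C -> A i j = 0.
  move=> iO jC; move: iO; rewrite in_setD => /andP [iC iS].
  have ji : j != i by apply: contraNneq iC => <-.
  apply/eqP/negP => /negP aij; move/negP: iC; apply.
  by apply: (comp_closed wS jC iS); rewrite /adjA Asym // aij andbT.
have hsplit : ~: U = O :|: (C :\ w).
  apply/setP => z; rewrite in_setC in_setU /O in_setD in_setD1.
  case zC: (z \in C).
    have := CS z zC; rewrite /S in_setC in_setD1 /=.
    by case: (eqVneq z w) => [->|] //=; rewrite wU.
  rewrite andbF orbF /= /S in_setC in_setD1.
  by case: (eqVneq z w) => [zw|] //=; move: zC; rewrite zw wC.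
have hph : ph (~: U) = ph O * ph (C :\ w).
  rewrite hsplit ph_mul_disj //.
    rewrite -setI_eq0; apply/eqP/setP => z.
    rewrite in_setI /O in_setD in_setD1 in_set0.
    by case: (z \in C); rewrite /= ?andbF.
  by move=> i j iO /setD1P [_ jC]; apply: noedge.
have phO : ph O != 0 by apply: contraNneq phU; rewrite hph => ->; rewrite mul0r.
have phCw : ph (C :\ w) != 0 by apply: contraNneq phU; rewrite hph => ->; rewrite mulr0.
have eqx v : ((l%:M - A) *m x) v 0 = 0.
  by rewrite mulmxBl Ax mul_scalar_mx subrr mxE.
have xoutS j : j \notin S -> x j 0 = 0.
  by move=> jS; apply: xU; move: jS; rewrite !inE negbK.
pose x2 : 'cV[R]_n := \col_v (if v \in C then 0 else x v 0).
have x20 : x2 = 0.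
  apply: (col_cancel phO); apply: NS_ker.
    move=> j jO; rewrite mxE; case jC: (j \in C) => //.
    by apply: xoutS; move: jO; rewrite in_setD jC.
  move=> v vO; rewrite -(eqx v) !mxE; apply: eq_bigr => j _; rewrite !mxE.
  case jC: (j \in C) => //.
  have vj : (v == j) = false.
    by apply: contraTF vO => /eqP ->; rewrite in_setD jC.
  by rewrite vj (noedge v j vO jC) subr0 mulr0n !mul0r.
have xC j : j \notin C -> x j 0 = 0.
  by move=> jC; move/matrixP: x20 => /(_ j 0); rewrite !mxE (negbTE jC).
have NSx : NS C *m x = 0 by apply: NS_ker.
have phC : ph C = 0.
  by apply/eqP; apply: contraNT xn0 => h; apply/eqP; apply: (col_cancel h NSx).
have xw : x w 0 != 0.
  apply: contraNneq xn0 => xw0; apply/eqP; apply: (col_cancel phCw); apply: NS_ker.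
    move=> j; rewrite in_setD1 negb_and negbK => /orP [/eqP -> //|]; exact: xC.
  by move=> v _; exact: eqx.
have bw : b w 0 = ph (C :\ w) by rewrite /b beta_u.
have bout j : j \notin C -> b j 0 = 0 by move=> jC; rewrite /b betaE (negbTE jC).
have NSb : NS C *m b = 0.
  by rewrite /b verif // phC; apply/matrixP => v k; rewrite !mxE mulr0.
pose g := x w 0 *: b - b w 0 *: x.
have gout j : j \notin C :\ w -> g j 0 = 0.
  rewrite in_setD1 negb_and negbK => /orP [/eqP ->|jC].
    by rewrite !mxE mulrC subrr.
  by rewrite !mxE (bout j jC) (xC j jC) !mulr0 subrr.
have NSg : NS C *m g = 0 by rewrite mulmxBr -!scalemxAr NSb NSx !scaler0 subrr.
have g0 : g = 0.
  apply: (col_cancel phCw); apply: NS_ker => // v vCw.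
  have vC : v \in C by case/setD1P: vCw.
  rewrite -(@NS_supp C g v) //; first by rewrite NSg mxE.
  by move=> j jC; apply: gout; rewrite in_setD1 negb_and jC orbT.
have hb : b = (b w 0 / x w 0) *: x.
  apply: (scalerI xw); rewrite scalerA mulrC -mulrA mulVf // mulr1.
  by apply/eqP; rewrite -subr_eq0 -/g g0.
split; first exact: bw.
split; first by rewrite bw.
by rewrite hb -scalemxAr Ax !scalerA mulrC.
Qed.

End MainI.
Theorem theorem3p8 (R : realType) (n : nat) (A : 'M[R]_n) (l : R) (k : nat)
    (u : 'I_k -> 'I_n) :
  A^T = A ->
  acyclic A ->
  eigenvalue A l ->
  eig_mult A l = k ->
  injective u ->
  star_set A l [set u i | i : 'I_k] ->
  let Ui i := [set u j | j : 'I_k] :\ u i in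
  let Ci i := component A (~: Ui i) (u i) in
  let alpha i : 'cV[R]_n :=
    \col_v (if v \in Ci i
            then pathweight A (u i) v * phi A (Ci i :\: pathset A (u i) v) l
            else 0) in
  (forall i, alpha i != 0 /\ A *m alpha i = l *: alpha i) /\
  (forall c : 'I_k -> R, \sum_i c i *: alpha i = 0 -> forall i, c i = 0).
Proof.
move=> sA acA eA mk uinj [cardU nev] Ui Ci alpha.
have phU : ph A l (~: [set u i | i : 'I_k]) != 0.
  by move: nev; rewrite eigenvalue_root_char -phiE.
have hk : (k <= mup l (char_poly A))%N by rewrite -mk.
have alphaE i : alpha i = beta A l (~: Ui i) (u i).
  by apply/matrixP => v j; rewrite (ord1 j) betaE mxE phiE.
have uU i : u i \in [set u j | j : 'I_k] by apply: imset_f.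
have key i : alpha i (u i) 0 != 0 /\ A *m alpha i = l *: alpha i.
  have [x xA [xn0 xv]] := exists_vec u i sA hk.
  have hAx : A *m x^T = l *: x^T by rewrite -{1}sA -trmx_mul xA linearZ.
  have hxn0 : x^T != 0 by rewrite trmx_eq0.
  have hxv : forall j, j \in [set u j | j : 'I_k] :\ u i -> x^T j 0 = 0.
    move=> j; rewrite in_setD1 => /andP [ji /imsetP [j' _ ej]].
    rewrite mxE ej; apply: xv; apply: contraNneq ji => e; by rewrite ej e.
  have [_ [h1 h2]] := main_i sA acA (uU i) phU hAx hxn0 hxv.
  by rewrite alphaE.
split.
  move=> i; have [h1 h2] := key i; split => //.
  by apply: contraNneq h1 => ->; rewrite mxE.
move=> c hc i0.
move/matrixP: hc => /(_ (u i0) 0); rewrite summxE mxE (bigD1 i0) //= big1 ?addr0.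
  by rewrite mxE => /eqP; rewrite mulf_eq0 (negbTE (key i0).1) orbF => /eqP.
move=> i ii0; rewrite mxE alphaE betaE.
case: ifP => [hin|]; last by rewrite mulr0.
have uiS : u i \in ~: Ui i by rewrite !inE eqxx.
have := comp_sub uiS hin; rewrite !inE negb_and negbK => /orP [/eqP/uinj ei|].
  by rewrite ei eqxx in ii0.
by rewrite uU.
Qed.
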